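(* Let $\Omega\subset\mathbb{R}^2$ be a domain with coordinates $(x,y)$ and let $r:\Omega\to S^5\subset\mathbb{C}^3$ be a smooth map such that $\psi=\mathcal{H}\circ r:\Omega\to\mathbb{C}P^2$ is a conformal Lagrangian immersion and $$\langle r,r_x\rangle=\langle r,r_y\rangle=\langle r_x,r_y\rangle=0,\qquad |r_x|=|r_y|=e^{v},$$ so that $e^{2v(x,y)}(dx^2+dy^2)$ is the induced metric. Let $\beta:\Omega\to\mathbb{R}$ be a smooth function (the Lagrangian angle) such that the matrix with rows $e^{i\beta}r,\ e^{-v}r_x,\ e^{-v}r_y$ lies in $\mathrm{SU}(3)$. Define real functions $f,g$ by $$if=\langle \partial_x(e^{-v}r_y),e^{-v}r_y\rangle,\qquad ig=\langle\partial_y(e^{-v}r_x),e^{-v}r_x\rangle,$$ and set $U=fe^{2v}$, $V=ge^{2v}$. Then $$U_y+V_x+e^{2v}\beta_{xy}=0,$$ $$V_y+v_ye^{2v}\beta_y=U_x+v_xe^{2v}\beta_x,$$ $$\Delta v+e^{2v}-2(U^2+V^2)e^{-4v}-(\beta_xU+\beta_yV)e^{-2v}=0,$$ where $\Delta=\partial_x^2+\partial_y^2$.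
   Context: $S^5$ is the unit sphere in $\mathbb{C}^3$, $\mathcal{H}:S^5\to\mathbb{C}P^2$ is the Hopf fibration, and $\langle u,w\rangle=\sum_{j=1}^3u_j\bar w_j$ is the standard Hermitian product on $\mathbb{C}^3$, $|u|^2=\langle u,u\rangle$. An immersion into $\mathbb{C}P^2$ is Lagrangian if the pullback of the Fubini–Study form vanishes, and conformal if its induced metric is a multiple of $dx^2+dy^2$; the stated orthogonality relations hold for a horizontal lift $r$ of such an immersion. *)

(* Defs.v *)
From Stdlib Require Import Reals.
From Coquelicot Require Import Coquelicot.
Open Scope R_scope.

Definition connected2 (O : R * R -> Prop) : Prop :=
  forall A B : R * R -> Prop,
    @open (prod_UniformSpace R_UniformSpace R_UniformSpace) A ->
    @open (prod_UniformSpace R_UniformSpace R_UniformSpace) B ->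
    (forall p, O p -> A p \/ B p) ->
    (forall p, O p -> A p -> B p -> False) ->
    (exists p, O p /\ A p) -> (exists p, O p /\ B p) -> False.

Definition domain2 (O : R * R -> Prop) : Prop :=
  (exists p, O p) /\
  @open (prod_UniformSpace R_UniformSpace R_UniformSpace) O /\
  connected2 O.

Definition dx (f : R -> R -> R) : R -> R -> R :=
  fun x y => Derive (fun t => f t y) x.
Definition dy (f : R -> R -> R) : R -> R -> R :=
  fun x y => Derive (fun t => f x t) y.

Fixpoint dpart (l : list bool) (f : R -> R -> R) : R -> R -> R :=
  match l with
  | nil => f
  | cons b l' => (if b then dx else dy) (dpart l' f)
  end.

Definition smooth_on (O : R * R -> Prop) (f : R -> R -> R) : Prop :=
  forall (l : list bool) (x y : R), O (x, y) ->
    ex_derive (fun t => dpart l f t y) x /\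
    ex_derive (fun t => dpart l f x t) y /\
    @continuous (prod_UniformSpace R_UniformSpace R_UniformSpace) R_UniformSpace
      (fun p : R * R => dpart l f (fst p) (snd p)) (x, y).

Definition C3 : Type := (C * C * C)%type.

Definition c3_1 (u : C3) : C := fst (fst u).
Definition c3_2 (u : C3) : C := snd (fst u).
Definition c3_3 (u : C3) : C := snd u.

Definition herm (u w : C3) : C :=
  Cplus (Cplus (Cmult (c3_1 u) (Cconj (c3_1 w)))
               (Cmult (c3_2 u) (Cconj (c3_2 w))))
        (Cmult (c3_3 u) (Cconj (c3_3 w))).

(* |u| = sqrt <u,u> (<u,u> is real and nonnegative) *)
Definition c3norm (u : C3) : R := sqrt (Re (herm u u)).

Definition c3scale (a : C) (u : C3) : C3 :=
  (Cmult a (c3_1 u), Cmult a (c3_2 u), Cmult a (c3_3 u)).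

Definition cdx (f : R -> R -> C) : R -> R -> C :=
  fun x y => (dx (fun a b => Re (f a b)) x y, dx (fun a b => Im (f a b)) x y).
Definition cdy (f : R -> R -> C) : R -> R -> C :=
  fun x y => (dy (fun a b => Re (f a b)) x y, dy (fun a b => Im (f a b)) x y).

Definition vdx (r : R -> R -> C3) : R -> R -> C3 :=
  fun x y => (cdx (fun a b => c3_1 (r a b)) x y,
              cdx (fun a b => c3_2 (r a b)) x y,
              cdx (fun a b => c3_3 (r a b)) x y).
Definition vdy (r : R -> R -> C3) : R -> R -> C3 :=
  fun x y => (cdy (fun a b => c3_1 (r a b)) x y,
              cdy (fun a b => c3_2 (r a b)) x y,
              cdy (fun a b => c3_3 (r a b)) x y).

Definition smooth_on_C3 (O : R * R -> Prop) (r : R -> R -> C3) : Prop :=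
  smooth_on O (fun x y => Re (c3_1 (r x y))) /\
  smooth_on O (fun x y => Im (c3_1 (r x y))) /\
  smooth_on O (fun x y => Re (c3_2 (r x y))) /\
  smooth_on O (fun x y => Im (c3_2 (r x y))) /\
  smooth_on O (fun x y => Re (c3_3 (r x y))) /\
  smooth_on O (fun x y => Im (c3_3 (r x y))).

Definition det3 (a b c : C3) : C :=
  let m := fun (u : C3) (i : nat) =>
    match i with 1%nat => c3_1 u | 2%nat => c3_2 u | _ => c3_3 u end in
  Cminus
   (Cplus (Cplus (Cmult (m a 1%nat) (Cmult (m b 2%nat) (m c 3%nat)))
                 (Cmult (m a 2%nat) (Cmult (m b 3%nat) (m c 1%nat))))
          (Cmult (m a 3%nat) (Cmult (m b 1%nat) (m c 2%nat))))
   (Cplus (Cplus (Cmult (m a 3%nat) (Cmult (m b 2%nat) (m c 1%nat)))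
                 (Cmult (m a 1%nat) (Cmult (m b 3%nat) (m c 2%nat))))
          (Cmult (m a 2%nat) (Cmult (m b 1%nat) (m c 3%nat)))).

(* The matrix M with rows a, b, c is in SU(3): M M^* = I, i.e. the
   (i,j) entry <row_i, row_j> is the Kronecker delta, and det M = 1. *)
Definition in_SU3 (a b c : C3) : Prop :=
  herm a a = RtoC 1 /\ herm b b = RtoC 1 /\ herm c c = RtoC 1 /\
  herm a b = RtoC 0 /\ herm a c = RtoC 0 /\ herm b c = RtoC 0 /\
  herm b a = RtoC 0 /\ herm c a = RtoC 0 /\ herm c b = RtoC 0 /\
  det3 a b c = RtoC 1.

Definition cexpi (t : R) : C := (cos t, sin t).

(* Main.v *)
Require Import Defs.
From Stdlib Require Import Reals Lra List.
From Coquelicot Require Import Coquelicot.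
Open Scope R_scope.


Definition c3add (u w : C3) : C3 :=
  (Cplus (c3_1 u) (c3_1 w), Cplus (c3_2 u) (c3_2 w), Cplus (c3_3 u) (c3_3 w)).

Lemma Cconj_RtoC (x : R) : Cconj (RtoC x) = RtoC x.
Proof. unfold Cconj, RtoC; simpl. f_equal; ring. Qed.
Lemma Cconj_Ci : Cconj Ci = Copp Ci.
Proof. unfold Cconj, Ci, Copp; simpl. f_equal; ring. Qed.

Ltac c3d := repeat match goal with
  | u : C3 |- _ => let a := fresh "a" in let b := fresh "b" in let c := fresh "c" in
                   destruct u as [[a b] c]
  end.
Ltac c3u := cbv [herm det3 c3scale c3add c3_1 c3_2 c3_3 fst snd].
Ltac cconj := repeat (rewrite ?Cplus_conj, ?Cmult_conj, ?Copp_conj, ?Cminus_conj,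
                        ?Cconj_conj, ?Cconj_RtoC, ?Cconj_Ci).
Ltac c3ring := c3d; c3u; cconj; ring.

Lemma herm_sym u w : herm u w = Cconj (herm w u).
Proof. c3ring. Qed.
Lemma herm_addl u1 u2 w : herm (c3add u1 u2) w = Cplus (herm u1 w) (herm u2 w).
Proof. c3ring. Qed.
Lemma herm_addr u w1 w2 : herm u (c3add w1 w2) = Cplus (herm u w1) (herm u w2).
Proof. c3ring. Qed.
Lemma herm_scalel a u w : herm (c3scale a u) w = Cmult a (herm u w).
Proof. c3ring. Qed.
Lemma herm_scaler a u w : herm u (c3scale a w) = Cmult (Cconj a) (herm u w).
Proof. c3ring. Qed.
Lemma det3_scale1 l a b c : det3 (c3scale l a) b c = Cmult l (det3 a b c).
Proof. c3ring. Qed.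

Lemma det3_lin1 (x y z : C) a b c :
  det3 (c3add (c3add (c3scale x a) (c3scale y b)) (c3scale z c)) b c = Cmult x (det3 a b c).
Proof. c3ring. Qed.
Lemma det3_lin2 (x y z : C) a b c :
  det3 a (c3add (c3add (c3scale x a) (c3scale y b)) (c3scale z c)) c = Cmult y (det3 a b c).
Proof. c3ring. Qed.
Lemma det3_lin3 (x y z : C) a b c :
  det3 a b (c3add (c3add (c3scale x a) (c3scale y b)) (c3scale z c)) = Cmult z (det3 a b c).
Proof. c3ring. Qed.

(* adjugate: det * conj(u_i) = combination of herm e_j u *)
Definition cm (x y z w : C) := Cminus (Cmult x y) (Cmult z w).
Lemma adj1 a b c u :
  Cmult (det3 a b c) (Cconj (c3_1 u)) =
  Cplus (Cplus (Cmult (cm (c3_2 b) (c3_3 c) (c3_3 b) (c3_2 c)) (herm a u))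
               (Cmult (cm (c3_3 a) (c3_2 c) (c3_2 a) (c3_3 c)) (herm b u)))
        (Cmult (cm (c3_2 a) (c3_3 b) (c3_3 a) (c3_2 b)) (herm c u)).
Proof. unfold cm. c3ring. Qed.
Lemma adj2 a b c u :
  Cmult (det3 a b c) (Cconj (c3_2 u)) =
  Cplus (Cplus (Cmult (cm (c3_3 b) (c3_1 c) (c3_1 b) (c3_3 c)) (herm a u))
               (Cmult (cm (c3_1 a) (c3_3 c) (c3_3 a) (c3_1 c)) (herm b u)))
        (Cmult (cm (c3_3 a) (c3_1 b) (c3_1 a) (c3_3 b)) (herm c u)).
Proof. unfold cm. c3ring. Qed.
Lemma adj3 a b c u :
  Cmult (det3 a b c) (Cconj (c3_3 u)) =
  Cplus (Cplus (Cmult (cm (c3_1 b) (c3_2 c) (c3_2 b) (c3_1 c)) (herm a u))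
               (Cmult (cm (c3_2 a) (c3_1 c) (c3_1 a) (c3_2 c)) (herm b u)))
        (Cmult (cm (c3_1 a) (c3_2 b) (c3_2 a) (c3_1 b)) (herm c u)).
Proof. unfold cm. c3ring. Qed.

Definition ortho3 (a b c : C3) : Prop :=
  herm a a = RtoC 1 /\ herm b b = RtoC 1 /\ herm c c = RtoC 1 /\
  herm a b = RtoC 0 /\ herm a c = RtoC 0 /\ herm b c = RtoC 0 /\
  herm b a = RtoC 0 /\ herm c a = RtoC 0 /\ herm c b = RtoC 0.

Definition expand3 (w a b c : C3) : C3 :=
  c3add (c3add (c3scale (herm w a) a) (c3scale (herm w b) b)) (c3scale (herm w c) c).

Lemma Cmult_eq0_l (d z : C) : d <> RtoC 0 -> Cmult d z = RtoC 0 -> z = RtoC 0.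
Proof.
  intros Hd H. replace z with (Cmult (Cinv d) (Cmult d z)).
  rewrite H. ring. field. exact Hd.
Qed.

Lemma conj_eq0 (z : C) : Cconj z = RtoC 0 -> z = RtoC 0.
Proof. intro H. rewrite <- (Cconj_conj z), H. apply Cconj_RtoC. Qed.

Lemma basis_expand a b c w : ortho3 a b c -> det3 a b c <> RtoC 0 ->
  w = expand3 w a b c.
Proof.
  intros (Haa & Hbb & Hcc & Hab & Hac & Hbc & Hba & Hca & Hcb) Hd.
  set (u := c3add w (c3scale (RtoC (-1)) (expand3 w a b c))).
  assert (Hua : herm u a = RtoC 0).
  { unfold u, expand3. rewrite !herm_addl, !herm_scalel, !herm_addl, !herm_scalel.
    rewrite Haa, Hba, Hca. ring. }
  assert (Hub : herm u b = RtoC 0).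
  { unfold u, expand3. rewrite !herm_addl, !herm_scalel, !herm_addl, !herm_scalel.
    rewrite Hab, Hbb, Hcb. ring. }
  assert (Huc : herm u c = RtoC 0).
  { unfold u, expand3. rewrite !herm_addl, !herm_scalel, !herm_addl, !herm_scalel.
    rewrite Hac, Hbc, Hcc. ring. }
  assert (Hau : herm a u = RtoC 0) by (rewrite herm_sym, Hua; apply Cconj_RtoC).
  assert (Hbu : herm b u = RtoC 0) by (rewrite herm_sym, Hub; apply Cconj_RtoC).
  assert (Hcu : herm c u = RtoC 0) by (rewrite herm_sym, Huc; apply Cconj_RtoC).
  assert (H1 : c3_1 u = RtoC 0).
  { apply conj_eq0. apply (Cmult_eq0_l _ _ Hd). rewrite adj1, Hau, Hbu, Hcu. ring. }
  assert (H2 : c3_2 u = RtoC 0).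
  { apply conj_eq0. apply (Cmult_eq0_l _ _ Hd). rewrite adj2, Hau, Hbu, Hcu. ring. }
  assert (H3 : c3_3 u = RtoC 0).
  { apply conj_eq0. apply (Cmult_eq0_l _ _ Hd). rewrite adj3, Hau, Hbu, Hcu. ring. }
  unfold u in H1, H2, H3. clear -H1 H2 H3. revert H1 H2 H3.
  generalize (expand3 w a b c). intros s H1 H2 H3.
  destruct w as [[w1 w2] w3], s as [[s1 s2] s3]. cbv [c3_1 c3_2 c3_3 c3add c3scale fst snd] in *.
  f_equal; [f_equal|].
  - transitivity (Cplus (Cplus w1 (Cmult (RtoC (-1)) s1)) s1); [ring | rewrite H1; ring].
  - transitivity (Cplus (Cplus w2 (Cmult (RtoC (-1)) s2)) s2); [ring | rewrite H2; ring].
  - transitivity (Cplus (Cplus w3 (Cmult (RtoC (-1)) s3)) s3); [ring | rewrite H3; ring].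
Qed.

Lemma det_deriv_alg a b c a' b' c' : ortho3 a b c -> det3 a b c <> RtoC 0 ->
  Cplus (Cplus (det3 a' b c) (det3 a b' c)) (det3 a b c') =
  Cmult (Cplus (Cplus (herm a' a) (herm b' b)) (herm c' c)) (det3 a b c).
Proof.
  intros Ho Hd.
  assert (E1 : det3 a' b c = Cmult (herm a' a) (det3 a b c)).
  { rewrite (basis_expand a b c a' Ho Hd) at 1. unfold expand3. apply det3_lin1. }
  assert (E2 : det3 a b' c = Cmult (herm b' b) (det3 a b c)).
  { rewrite (basis_expand a b c b' Ho Hd) at 1. unfold expand3. apply det3_lin2. }
  assert (E3 : det3 a b c' = Cmult (herm c' c) (det3 a b c)).
  { rewrite (basis_expand a b c c' Ho Hd) at 1. unfold expand3. apply det3_lin3. }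
  rewrite E1, E2, E3. ring.
Qed.
Ltac c3ringv := c3d; c3u; cconj; f_equal; [f_equal|]; ring.


Implicit Types (f g : R -> R) (t s : R).
Lemma rd_plus f g t (a b : R) : is_derive f t a -> is_derive g t b ->
  is_derive (fun s => f s + g s) t (a + b).
Proof. intros. apply (is_derive_plus f g t a b); auto. Qed.
Lemma rd_minus f g t (a b : R) : is_derive f t a -> is_derive g t b ->
  is_derive (fun s => f s - g s) t (a - b).
Proof. intros. apply (is_derive_minus f g t a b); auto. Qed.
Lemma rd_mult f g t (a b : R) : is_derive f t a -> is_derive g t b ->
  is_derive (fun s => f s * g s) t (a * g t + f t * b).
Proof. intros. apply (is_derive_mult f g t a b); auto. intros; apply Rmult_comm. Qed.
Lemma rd_opp f t (a : R) : is_derive f t a -> is_derive (fun s => - f s) t (- a).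
Proof. intros. apply (is_derive_opp f t a); auto. Qed.
Lemma rd_const (c t : R) : is_derive (fun _ : R => c) t 0.
Proof. apply (is_derive_const c t). Qed.
Lemma rd_val f t (a b : R) : is_derive f t a -> a = b -> is_derive f t b.
Proof. intros H ->; exact H. Qed.
Lemma rd_ext f g t (a : R) : (forall s, f s = g s) -> is_derive f t a -> is_derive g t a.
Proof. intros. apply (is_derive_ext f g); auto. Qed.
Lemma rd_unique f t (a b : R) : is_derive f t a -> is_derive f t b -> a = b.
Proof. intros H1 H2. apply is_derive_unique in H1. apply is_derive_unique in H2. congruence. Qed.
Lemma rd_ext_loc f g t (a : R) : locally t (fun s => f s = g s) -> is_derive f t a -> is_derive g t a.
Proof. intros. apply (is_derive_ext_loc f g); auto. Qed.
Lemma rd_exp f t (a : R) : is_derive f t a -> is_derive (fun s => exp (f s)) t (exp (f t) * a).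
Proof.
  intros H. eapply rd_val. apply (is_derive_comp exp f t (exp (f t)) a); auto.
  apply is_derive_Reals. apply derivable_pt_lim_exp. apply Rmult_comm.
Qed.

Definition cder (h : R -> C) (t : R) (d : C) : Prop :=
  is_derive (fun s => fst (h s)) t (fst d) /\ is_derive (fun s => snd (h s)) t (snd d).
Definition vder (h : R -> C3) (t : R) (d : C3) : Prop :=
  cder (fun s => c3_1 (h s)) t (c3_1 d) /\ cder (fun s => c3_2 (h s)) t (c3_2 d) /\
  cder (fun s => c3_3 (h s)) t (c3_3 d).

Lemma cder_val (h : R -> C) t (d d' : C) : cder h t d -> d = d' -> cder h t d'.
Proof. intros H ->; exact H. Qed.
Lemma vder_val (h : R -> C3) t (d d' : C3) : vder h t d -> d = d' -> vder h t d'.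
Proof. intros H ->; exact H. Qed.
Lemma cder_ext (h1 h2 : R -> C) t (d : C) : (forall s, h1 s = h2 s) -> cder h1 t d -> cder h2 t d.
Proof. intros E [H1 H2]. split; [apply (rd_ext (fun s => fst (h1 s))) | apply (rd_ext (fun s => snd (h1 s)))]; auto; intros; rewrite E; auto. Qed.
Lemma cder_ext_loc (h1 h2 : R -> C) t (d : C) : locally t (fun s => h1 s = h2 s) -> cder h1 t d -> cder h2 t d.
Proof.
  intros E [H1 H2]. split; (eapply rd_ext_loc; [|eassumption]);
  (eapply filter_imp; [|exact E]); intros s e; rewrite e; reflexivity.
Qed.
Lemma vder_ext_loc (h1 h2 : R -> C3) t (d : C3) : locally t (fun s => h1 s = h2 s) -> vder h1 t d -> vder h2 t d.
Proof.
  intros E (H1 & H2 & H3). split; [|split]; (eapply cder_ext_loc; [|eassumption]);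
  (eapply filter_imp; [|exact E]); intros s e; rewrite e; reflexivity.
Qed.
Lemma cder_unique (h : R -> C) t (d1 d2 : C) : cder h t d1 -> cder h t d2 -> d1 = d2.
Proof.
  intros [A1 B1] [A2 B2]. destruct d1, d2. cbn [fst snd] in *.
  f_equal; eapply rd_unique; eassumption.
Qed.
Lemma vder_unique (h : R -> C3) t (d1 d2 : C3) : vder h t d1 -> vder h t d2 -> d1 = d2.
Proof.
  intros (A1 & B1 & C1) (A2 & B2 & C2).
  destruct d1 as [[? ?] ?], d2 as [[? ?] ?]. cbv [c3_1 c3_2 c3_3 fst snd] in *.
  f_equal; [f_equal|]; eapply cder_unique; eassumption.
Qed.
Lemma cder_const (c : C) t : cder (fun _ : R => c) t (RtoC 0).
Proof. split; apply rd_const. Qed.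
Lemma cder_const_loc (h : R -> C) t (d c : C) : cder h t d -> locally t (fun s => h s = c) -> d = RtoC 0.
Proof.
  intros H E. eapply cder_unique. exact H.
  eapply cder_ext_loc. 2: apply (cder_const c).
  (eapply filter_imp; [|exact E]); intros s e; rewrite e; reflexivity.
Qed.
Lemma cder_RtoC f t (a : R) : is_derive f t a -> cder (fun s => RtoC (f s)) t (RtoC a).
Proof. intros H. unfold cder, RtoC; cbn [fst snd]. split. exact H. apply rd_const. Qed.
Lemma cder_plus (h1 h2 : R -> C) t (d1 d2 : C) : cder h1 t d1 -> cder h2 t d2 ->
  cder (fun s => Cplus (h1 s) (h2 s)) t (Cplus d1 d2).
Proof.
  intros [A1 B1] [A2 B2]. split.
  - apply (rd_ext (fun s => fst (h1 s) + fst (h2 s))). reflexivity. apply rd_plus; auto.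
  - apply (rd_ext (fun s => snd (h1 s) + snd (h2 s))). reflexivity. apply rd_plus; auto.
Qed.
Lemma cder_mult (h1 h2 : R -> C) t (d1 d2 : C) : cder h1 t d1 -> cder h2 t d2 ->
  cder (fun s => Cmult (h1 s) (h2 s)) t (Cplus (Cmult d1 (h2 t)) (Cmult (h1 t) d2)).
Proof.
  intros [A1 B1] [A2 B2]. split.
  - apply (rd_ext (fun s => fst (h1 s) * fst (h2 s) - snd (h1 s) * snd (h2 s))). reflexivity.
    eapply rd_val. apply rd_minus; apply rd_mult; eauto. unfold Cmult, Cplus, Re, Im; cbn [fst snd]; ring.
  - apply (rd_ext (fun s => fst (h1 s) * snd (h2 s) + snd (h1 s) * fst (h2 s))). reflexivity.
    eapply rd_val. apply rd_plus; apply rd_mult; eauto. unfold Cmult, Cplus, Re, Im; cbn [fst snd]; ring.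
Qed.
Lemma cder_conj (h : R -> C) t (d : C) : cder h t d -> cder (fun s => Cconj (h s)) t (Cconj d).
Proof. intros [A B]. unfold cder, Cconj; cbn [fst snd]. split. exact A. apply rd_opp; exact B. Qed.

Lemma cder_opp (h : R -> C) t (d : C) : cder h t d -> cder (fun s => Copp (h s)) t (Copp d).
Proof. intros [A B]. unfold cder, Copp; cbn [fst snd]. split; apply rd_opp; auto. Qed.

Lemma vder_add (u w : R -> C3) t (u' w' : C3) : vder u t u' -> vder w t w' ->
  vder (fun s => c3add (u s) (w s)) t (c3add u' w').
Proof. intros (A1&A2&A3) (B1&B2&B3). split; [|split]; apply cder_plus; auto. Qed.
Lemma vder_scale (l : R -> C) (w : R -> C3) t (l' : C) (w' : C3) : cder l t l' -> vder w t w' ->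
  vder (fun s => c3scale (l s) (w s)) t (c3add (c3scale l' (w t)) (c3scale (l t) w')).
Proof. intros L (B1&B2&B3). split; [|split]; apply cder_mult; auto. Qed.
Lemma herm_der (u w : R -> C3) t (u' w' : C3) : vder u t u' -> vder w t w' ->
  cder (fun s => herm (u s) (w s)) t (Cplus (herm u' (w t)) (herm (u t) w')).
Proof.
  intros (A1&A2&A3) (B1&B2&B3). unfold herm.
  eapply cder_val. apply cder_plus. apply cder_plus. apply cder_mult. exact A1. apply cder_conj. exact B1.
  apply cder_mult. exact A2. apply cder_conj. exact B2.
  apply cder_mult. exact A3. apply cder_conj. exact B3.
  cbv [c3_1 c3_2 c3_3]. ring.
Qed.
Lemma det3_der (a b c : R -> C3) t (a' b' c' : C3) : vder a t a' -> vder b t b' -> vder c t c' ->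
  cder (fun s => det3 (a s) (b s) (c s)) t
    (Cplus (Cplus (det3 a' (b t) (c t)) (det3 (a t) b' (c t))) (det3 (a t) (b t) c')).
Proof.
  intros (A1&A2&A3) (B1&B2&B3) (C1&C2&C3). unfold det3, Cminus. cbv beta iota zeta.
  eapply cder_val.
  apply cder_plus; [|apply cder_opp];
  (apply cder_plus; [apply cder_plus|]);
  (apply cder_mult; [|apply cder_mult]);
  first [exact A1 | exact A2 | exact A3 | exact B1 | exact B2 | exact B3 | exact C1 | exact C2 | exact C3].
  cbv [c3_1 c3_2 c3_3]. ring.
Qed.


Definition openO (O : R * R -> Prop) : Prop :=
  @open (prod_UniformSpace R_UniformSpace R_UniformSpace) O.

Lemma loc2d (O : R * R -> Prop) a b : openO O -> O (a, b) ->
  locally_2d (fun u w => O (u, w)) a b.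
Proof.
  intros Ho H. apply locally_2d_locally. specialize (Ho _ H).
  eapply filter_imp; [|exact Ho]. intros [u w] Hz. exact Hz.
Qed.
Lemma loc_x (O : R * R -> Prop) a b : openO O -> O (a, b) -> locally a (fun t => O (t, b)).
Proof. intros Ho H. apply (locally_2d_1d_const_y (fun u w => O (u, w))). apply loc2d; auto. Qed.
Lemma loc_y (O : R * R -> Prop) a b : openO O -> O (a, b) -> locally b (fun t => O (a, t)).
Proof. intros Ho H. apply (locally_2d_1d_const_x (fun u w => O (u, w))). apply loc2d; auto. Qed.

Lemma dpart_app l1 l2 F : dpart (l1 ++ l2) F = dpart l1 (dpart l2 F).
Proof. induction l1 as [|b l1 IH]; simpl; [reflexivity | rewrite IH; reflexivity]. Qed.

Lemma smooth_dpart O F l : smooth_on O F -> smooth_on O (dpart l F).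
Proof. intros H l' x y Hxy. rewrite <- dpart_app. apply H; auto. Qed.

Lemma smooth_isd_x O F a b : smooth_on O F -> O (a, b) ->
  is_derive (fun t => F t b) a (dx F a b).
Proof. intros H Hab. destruct (H nil a b Hab) as [H1 _]. apply Derive_correct. exact H1. Qed.
Lemma smooth_isd_y O F a b : smooth_on O F -> O (a, b) ->
  is_derive (fun t => F a t) b (dy F a b).
Proof. intros H Hab. destruct (H nil a b Hab) as [_ [H1 _]]. apply Derive_correct. exact H1. Qed.

Lemma schwarz_on O F a b : openO O -> smooth_on O F -> O (a, b) ->
  dx (dy F) a b = dy (dx F) a b.
Proof.
  intros Ho HF Hab. unfold dx, dy.
  apply Schwarz.
  - generalize (loc2d O a b Ho Hab). unfold locally_2d. intros [d Hd]. exists d.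
    intros u w Hu Hw. specialize (Hd u w Hu Hw).
    destruct (HF nil u w Hd) as [E1 [E2 _]].
    destruct (HF (false :: nil) u w Hd) as [E3 _].
    destruct (HF (true :: nil) u w Hd) as [_ [E4 _]].
    repeat split; assumption.
  - apply continuity_2d_pt_filterlim.
    destruct (HF (true :: false :: nil) a b Hab) as [_ [_ Hc]]. exact Hc.
  - apply continuity_2d_pt_filterlim.
    destruct (HF (false :: true :: nil) a b Hab) as [_ [_ Hc]]. exact Hc.
Qed.

Lemma smoothC3_dx O P : smooth_on_C3 O P -> smooth_on_C3 O (vdx P).
Proof.
  intros (H1&H2&H3&H4&H5&H6).
  split; [exact (smooth_dpart O _ (true::nil) H1)|].
  split; [exact (smooth_dpart O _ (true::nil) H2)|].
  split; [exact (smooth_dpart O _ (true::nil) H3)|].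
  split; [exact (smooth_dpart O _ (true::nil) H4)|].
  split; [exact (smooth_dpart O _ (true::nil) H5)|].
  exact (smooth_dpart O _ (true::nil) H6).
Qed.
Lemma smoothC3_dy O P : smooth_on_C3 O P -> smooth_on_C3 O (vdy P).
Proof.
  intros (H1&H2&H3&H4&H5&H6).
  split; [exact (smooth_dpart O _ (false::nil) H1)|].
  split; [exact (smooth_dpart O _ (false::nil) H2)|].
  split; [exact (smooth_dpart O _ (false::nil) H3)|].
  split; [exact (smooth_dpart O _ (false::nil) H4)|].
  split; [exact (smooth_dpart O _ (false::nil) H5)|].
  exact (smooth_dpart O _ (false::nil) H6).
Qed.

Lemma vder_dx O P a b : smooth_on_C3 O P -> O (a, b) -> vder (fun t => P t b) a (vdx P a b).
Proof.
  intros (H1&H2&H3&H4&H5&H6) Hab.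
  split; [|split]; split; eapply smooth_isd_x; eassumption.
Qed.
Lemma vder_dy O P a b : smooth_on_C3 O P -> O (a, b) -> vder (fun t => P a t) b (vdy P a b).
Proof.
  intros (H1&H2&H3&H4&H5&H6) Hab.
  split; [|split]; split; eapply smooth_isd_y; eassumption.
Qed.
Lemma c3_eq (u w : C3) :
  Re (c3_1 u) = Re (c3_1 w) -> Im (c3_1 u) = Im (c3_1 w) ->
  Re (c3_2 u) = Re (c3_2 w) -> Im (c3_2 u) = Im (c3_2 w) ->
  Re (c3_3 u) = Re (c3_3 w) -> Im (c3_3 u) = Im (c3_3 w) -> u = w.
Proof.
  destruct u as [[[? ?] [? ?]] [? ?]], w as [[[? ?] [? ?]] [? ?]].
  cbv [c3_1 c3_2 c3_3 Re Im fst snd]. intros; subst; reflexivity.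
Qed.
Lemma vschwarz O P a b : openO O -> smooth_on_C3 O P -> O (a, b) ->
  vdx (vdy P) a b = vdy (vdx P) a b.
Proof.
  intros Ho (H1&H2&H3&H4&H5&H6) Hab.
  apply c3_eq.
  exact (schwarz_on O _ a b Ho H1 Hab).
  exact (schwarz_on O _ a b Ho H2 Hab).
  exact (schwarz_on O _ a b Ho H3 Hab).
  exact (schwarz_on O _ a b Ho H4 Hab).
  exact (schwarz_on O _ a b Ho H5 Hab).
  exact (schwarz_on O _ a b Ho H6 Hab).
Qed.

Lemma vdx_of (h : R -> R -> C3) a b d : vder (fun t => h t b) a d -> vdx h a b = d.
Proof.
  intros ((A1&A2)&(B1&B2)&(C1&C2)). apply c3_eq; apply is_derive_unique; assumption.
Qed.
Lemma vdy_of (h : R -> R -> C3) a b d : vder (fun t => h a t) b d -> vdy h a b = d.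
Proof.
  intros ((A1&A2)&(B1&B2)&(C1&C2)). apply c3_eq; apply is_derive_unique; assumption.
Qed.


Definition scl (v : R -> R -> R) (P : R -> R -> C3) (a b : R) : C3 :=
  c3scale (RtoC (exp (- v a b))) (P a b).
Definition dscl_x v P a b : C3 :=
  c3add (c3scale (RtoC (- dx v a b)) (scl v P a b)) (scl v (vdx P) a b).
Definition dscl_y v P a b : C3 :=
  c3add (c3scale (RtoC (- dy v a b)) (scl v P a b)) (scl v (vdy P) a b).

Lemma RtoC_mult' (x y : R) : RtoC (x * y) = Cmult (RtoC x) (RtoC y).
Proof. unfold RtoC, Cmult, Re, Im; cbn [fst snd]. f_equal; ring. Qed.

Lemma vder_scl_x O v P a b : smooth_on O v -> smooth_on_C3 O P -> O (a, b) ->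
  vder (fun t => scl v P t b) a (dscl_x v P a b).
Proof.
  intros Hv HP Hab. unfold scl.
  eapply vder_val. apply vder_scale.
  - apply cder_RtoC. apply rd_exp. apply rd_opp. apply (smooth_isd_x O v a b Hv Hab).
  - apply (vder_dx O P a b HP Hab).
  - unfold dscl_x, scl. rewrite RtoC_mult'. generalize (P a b) (vdx P a b). intros. c3ringv.
Qed.
Lemma vder_scl_y O v P a b : smooth_on O v -> smooth_on_C3 O P -> O (a, b) ->
  vder (fun t => scl v P a t) b (dscl_y v P a b).
Proof.
  intros Hv HP Hab. unfold scl.
  eapply vder_val. apply vder_scale.
  - apply cder_RtoC. apply rd_exp. apply rd_opp. apply (smooth_isd_y O v a b Hv Hab).
  - apply (vder_dy O P a b HP Hab).
  - unfold dscl_y, scl. rewrite RtoC_mult'. generalize (P a b) (vdy P a b). intros. c3ringv.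
Qed.

Lemma rd_cos f t (a : R) : is_derive f t a -> is_derive (fun s => cos (f s)) t (- sin (f t) * a).
Proof.
  intros H. eapply rd_val. apply (is_derive_comp cos f t (- sin (f t)) a); auto.
  apply is_derive_Reals. apply derivable_pt_lim_cos. apply Rmult_comm.
Qed.
Lemma rd_sin f t (a : R) : is_derive f t a -> is_derive (fun s => sin (f s)) t (cos (f t) * a).
Proof.
  intros H. eapply rd_val. apply (is_derive_comp sin f t (cos (f t)) a); auto.
  apply is_derive_Reals. apply derivable_pt_lim_sin. apply Rmult_comm.
Qed.
Lemma cder_cexpi f t (a : R) : is_derive f t a ->
  cder (fun s => cexpi (f s)) t (Cmult (Cmult Ci (RtoC a)) (cexpi (f t))).
Proof.
  intros H. unfold cder, cexpi. cbn [fst snd]. split.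
  - eapply rd_val. apply rd_cos; exact H. unfold Cmult, Ci, RtoC, Re, Im; cbn [fst snd]; ring.
  - eapply rd_val. apply rd_sin; exact H. unfold Cmult, Ci, RtoC, Re, Im; cbn [fst snd]; ring.
Qed.
Lemma cexpi_norm t : Cmult (cexpi t) (Cconj (cexpi t)) = RtoC 1.
Proof.
  unfold cexpi, Cmult, Cconj, RtoC, Re, Im; cbn [fst snd]. f_equal.
  - rewrite <- (sin2_cos2 t). unfold Rsqr. ring.
  - ring.
Qed.


Lemma unit_l (l z : C) : Cmult l (Cconj l) = RtoC 1 -> Cmult l z = RtoC 0 -> z = RtoC 0.
Proof. intros Hl H. transitivity (Cmult (Cmult l (Cconj l)) z). rewrite Hl; ring.
  transitivity (Cmult (Cconj l) (Cmult l z)). ring. rewrite H; ring. Qed.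
Lemma unit_r (l z : C) : Cmult l (Cconj l) = RtoC 1 -> Cmult (Cconj l) z = RtoC 0 -> z = RtoC 0.
Proof. intros Hl H. transitivity (Cmult (Cmult l (Cconj l)) z). rewrite Hl; ring.
  transitivity (Cmult l (Cmult (Cconj l) z)). ring. rewrite H; ring. Qed.
Lemma unit_1 (l z : C) : Cmult l (Cconj l) = RtoC 1 -> Cmult l (Cmult (Cconj l) z) = RtoC 1 -> z = RtoC 1.
Proof. intros Hl H. transitivity (Cmult (Cmult l (Cconj l)) z). rewrite Hl; ring.
  rewrite <- H; ring. Qed.

Lemma c3scale_comb x y u : c3scale x (c3scale y u) = c3scale (Cmult x y) u.
Proof. c3ringv. Qed.
Lemma c3scale_1 u : c3scale (RtoC 1) u = u.
Proof. c3ringv. Qed.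
Lemma exp_cancel (w : R) : Cmult (RtoC (exp w)) (RtoC (exp (- w))) = RtoC 1.
Proof. rewrite <- RtoC_mult', <- exp_plus, Rplus_opp_r, exp_0. reflexivity. Qed.

Lemma ortho_der (u w : R -> C3) t u' w' c : vder u t u' -> vder w t w' ->
  locally t (fun s => herm (u s) (w s) = c) -> Cplus (herm u' (w t)) (herm (u t) w') = RtoC 0.
Proof. intros Hu Hw E. eapply cder_const_loc. apply herm_der; eassumption. exact E. Qed.

Lemma det_frame (a b c : R -> C3) t a' b' c' : vder a t a' -> vder b t b' -> vder c t c' ->
  ortho3 (a t) (b t) (c t) -> locally t (fun s => det3 (a s) (b s) (c s) = RtoC 1) ->
  det3 (a t) (b t) (c t) = RtoC 1 ->
  Cplus (Cplus (herm a' (a t)) (herm b' (b t))) (herm c' (c t)) = RtoC 0.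
Proof.
  intros Ha Hb Hc Ho E D1.
  assert (Z := cder_const_loc _ _ _ _ (det3_der a b c t a' b' c' Ha Hb Hc) E).
  rewrite det_deriv_alg in Z; auto.
  - rewrite D1 in Z. rewrite <- Z. ring.
  - rewrite D1. intro K. apply RtoC_inj in K. lra.
Qed.

Lemma plus0 (x y : C) : Cplus x y = RtoC 0 -> x = Copp y.
Proof. intro H. transitivity (Cplus (Cplus x y) (Copp y)). ring. rewrite H. ring. Qed.
Ltac cpair := unfold Cminus, Cmult, Cplus, Copp, Cconj, RtoC, Ci, Re, Im; cbn [fst snd]; f_equal; ring.

Lemma herm_expand_r a b c u w : ortho3 a b c -> det3 a b c <> RtoC 0 ->
  herm u w = Cplus (Cplus (Cmult (Cconj (herm w a)) (herm u a)) (Cmult (Cconj (herm w b)) (herm u b)))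
                   (Cmult (Cconj (herm w c)) (herm u c)).
Proof.
  intros Ho Hd. rewrite (basis_expand a b c w Ho Hd) at 1. unfold expand3.
  rewrite !herm_addr, !herm_scaler. reflexivity.
Qed.
Lemma rd_scal2 f t (k a : R) : is_derive f t a -> is_derive (fun s => k * f s) t (k * a).
Proof. intros H. apply (is_derive_scal f t k a H). Qed.

Section Main.
Variables (Omega : R * R -> Prop) (r : R -> R -> C3) (v beta f g : R -> R -> R).
Hypothesis Ho : openO Omega.
Hypothesis Hr : smooth_on_C3 Omega r.
Hypothesis Hv : smooth_on Omega v.
Hypothesis Hb : smooth_on Omega beta.
Hypothesis HSU : forall x y, Omega (x, y) ->
  in_SU3 (c3scale (cexpi (beta x y)) (r x y)) (scl v (vdx r) x y) (scl v (vdy r) x y).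
Hypothesis Hf : forall x y, Omega (x, y) ->
  Cmult Ci (RtoC (f x y)) = herm (vdx (scl v (vdy r)) x y) (scl v (vdy r) x y).
Hypothesis Hg : forall x y, Omega (x, y) ->
  Cmult Ci (RtoC (g x y)) = herm (vdy (scl v (vdx r)) x y) (scl v (vdx r) x y).

Local Notation e1 := (scl v (vdx r)).
Local Notation e2 := (scl v (vdy r)).

Lemma ON a b : Omega (a, b) ->
  ortho3 (r a b) (e1 a b) (e2 a b) /\ det3 (r a b) (e1 a b) (e2 a b) <> RtoC 0.
Proof.
  intros H. destruct (HSU a b H) as (h1&h2&h3&h4&h5&h6&h7&h8&h9&h10).
  pose proof (cexpi_norm (beta a b)) as Hl.
  rewrite herm_scalel, herm_scaler in h1.
  rewrite herm_scalel in h4, h5. rewrite herm_scaler in h7, h8.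
  rewrite det3_scale1 in h10.
  split; [repeat split|].
  - exact (unit_1 _ _ Hl h1).
  - exact h2.
  - exact h3.
  - exact (unit_l _ _ Hl h4).
  - exact (unit_l _ _ Hl h5).
  - exact h6.
  - exact (unit_r _ _ Hl h7).
  - exact (unit_r _ _ Hl h8).
  - exact h9.
  - intro E. rewrite E in h10.
    assert (Z : RtoC 0 = RtoC 1) by (rewrite <- h10; ring). apply RtoC_inj in Z. lra.
Qed.

Lemma PE1 a b : vdx r a b = c3scale (RtoC (exp (v a b))) (e1 a b).
Proof. unfold scl. rewrite c3scale_comb, exp_cancel, c3scale_1. reflexivity. Qed.
Lemma PE2 a b : vdy r a b = c3scale (RtoC (exp (v a b))) (e2 a b).
Proof. unfold scl. rewrite c3scale_comb, exp_cancel, c3scale_1. reflexivity. Qed.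

Lemma E1x_f a b : Omega (a, b) -> vdx e1 a b = dscl_x v (vdx r) a b.
Proof. intro H. apply vdx_of. apply (vder_scl_x Omega); auto. apply smoothC3_dx; auto. Qed.
Lemma E1y_f a b : Omega (a, b) -> vdy e1 a b = dscl_y v (vdx r) a b.
Proof. intro H. apply vdy_of. apply (vder_scl_y Omega); auto. apply smoothC3_dx; auto. Qed.
Lemma E2x_f a b : Omega (a, b) -> vdx e2 a b = dscl_x v (vdy r) a b.
Proof. intro H. apply vdx_of. apply (vder_scl_x Omega); auto. apply smoothC3_dy; auto. Qed.
Lemma E2y_f a b : Omega (a, b) -> vdy e2 a b = dscl_y v (vdy r) a b.
Proof. intro H. apply vdy_of. apply (vder_scl_y Omega); auto. apply smoothC3_dy; auto. Qed.

Lemma vd_e1_x a b : Omega (a, b) -> vder (fun t => e1 t b) a (vdx e1 a b).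
Proof. intro H. rewrite E1x_f by auto. apply (vder_scl_x Omega); auto. apply smoothC3_dx; auto. Qed.
Lemma vd_e1_y a b : Omega (a, b) -> vder (fun t => e1 a t) b (vdy e1 a b).
Proof. intro H. rewrite E1y_f by auto. apply (vder_scl_y Omega); auto. apply smoothC3_dx; auto. Qed.
Lemma vd_e2_x a b : Omega (a, b) -> vder (fun t => e2 t b) a (vdx e2 a b).
Proof. intro H. rewrite E2x_f by auto. apply (vder_scl_x Omega); auto. apply smoothC3_dy; auto. Qed.
Lemma vd_e2_y a b : Omega (a, b) -> vder (fun t => e2 a t) b (vdy e2 a b).
Proof. intro H. rewrite E2y_f by auto. apply (vder_scl_y Omega); auto. apply smoothC3_dy; auto. Qed.
Lemma vd_r_x a b : Omega (a, b) -> vder (fun t => r t b) a (vdx r a b).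
Proof. intro H. apply (vder_dx Omega); auto. Qed.
Lemma vd_r_y a b : Omega (a, b) -> vder (fun t => r a t) b (vdy r a b).
Proof. intro H. apply (vder_dy Omega); auto. Qed.

Lemma locx (P : R -> R -> Prop) a b : Omega (a, b) -> (forall s t, Omega (s, t) -> P s t) ->
  locally a (fun s => P s b).
Proof. intros H HP. eapply filter_imp; [|apply (loc_x Omega a b Ho H)]. intros s Hs. auto. Qed.
Lemma locy (P : R -> R -> Prop) a b : Omega (a, b) -> (forall s t, Omega (s, t) -> P s t) ->
  locally b (fun t => P a t).
Proof. intros H HP. eapply filter_imp; [|apply (loc_y Omega a b Ho H)]. intros s Hs. auto. Qed.


Lemma Dfacts a b : Omega (a, b) ->
  Cplus (herm (vdx e1 a b) (r a b)) (herm (e1 a b) (vdx r a b)) = RtoC 0 /\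
  Cplus (herm (vdy e1 a b) (r a b)) (herm (e1 a b) (vdy r a b)) = RtoC 0 /\
  Cplus (herm (vdx e2 a b) (r a b)) (herm (e2 a b) (vdx r a b)) = RtoC 0 /\
  Cplus (herm (vdy e2 a b) (r a b)) (herm (e2 a b) (vdy r a b)) = RtoC 0 /\
  Cplus (herm (vdx e1 a b) (e2 a b)) (herm (e1 a b) (vdx e2 a b)) = RtoC 0 /\
  Cplus (herm (vdy e1 a b) (e2 a b)) (herm (e1 a b) (vdy e2 a b)) = RtoC 0.
Proof.
  intro H.
  split; [|split; [|split; [|split; [|split]]]].
  - eapply (ortho_der (fun t => e1 t b) (fun t => r t b)).
    apply vd_e1_x; auto. apply vd_r_x; auto.
    apply (locx (fun s t => herm (e1 s t) (r s t) = RtoC 0)); auto.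
    intros s t h; destruct (ON s t h) as [(?&?&?&?&?&?&?&?&?) _]; assumption.
  - eapply (ortho_der (fun t => e1 a t) (fun t => r a t)).
    apply vd_e1_y; auto. apply vd_r_y; auto.
    apply (locy (fun s t => herm (e1 s t) (r s t) = RtoC 0)); auto.
    intros s t h; destruct (ON s t h) as [(?&?&?&?&?&?&?&?&?) _]; assumption.
  - eapply (ortho_der (fun t => e2 t b) (fun t => r t b)).
    apply vd_e2_x; auto. apply vd_r_x; auto.
    apply (locx (fun s t => herm (e2 s t) (r s t) = RtoC 0)); auto.
    intros s t h; destruct (ON s t h) as [(?&?&?&?&?&?&?&?&?) _]; assumption.
  - eapply (ortho_der (fun t => e2 a t) (fun t => r a t)).
    apply vd_e2_y; auto. apply vd_r_y; auto.
    apply (locy (fun s t => herm (e2 s t) (r s t) = RtoC 0)); auto.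
    intros s t h; destruct (ON s t h) as [(?&?&?&?&?&?&?&?&?) _]; assumption.
  - eapply (ortho_der (fun t => e1 t b) (fun t => e2 t b)).
    apply vd_e1_x; auto. apply vd_e2_x; auto.
    apply (locx (fun s t => herm (e1 s t) (e2 s t) = RtoC 0)); auto.
    intros s t h; destruct (ON s t h) as [(?&?&?&?&?&?&?&?&?) _]; assumption.
  - eapply (ortho_der (fun t => e1 a t) (fun t => e2 a t)).
    apply vd_e1_y; auto. apply vd_e2_y; auto.
    apply (locy (fun s t => herm (e1 s t) (e2 s t) = RtoC 0)); auto.
    intros s t h; destruct (ON s t h) as [(?&?&?&?&?&?&?&?&?) _]; assumption.
Qed.

Lemma SU_ortho a b : Omega (a, b) ->
  ortho3 (c3scale (cexpi (beta a b)) (r a b)) (e1 a b) (e2 a b) /\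
  det3 (c3scale (cexpi (beta a b)) (r a b)) (e1 a b) (e2 a b) = RtoC 1.
Proof.
  intro H. destruct (HSU a b H) as (h1&h2&h3&h4&h5&h6&h7&h8&h9&h10).
  split; [repeat split|]; assumption.
Qed.

Lemma Detx a b : Omega (a, b) ->
  Cplus (Cplus (Cmult Ci (RtoC (dx beta a b))) (herm (vdx e1 a b) (e1 a b)))
        (herm (vdx e2 a b) (e2 a b)) = RtoC 0.
Proof.
  intro H.
  assert (VF : vder (fun s => c3scale (cexpi (beta s b)) (r s b)) a
     (c3add (c3scale (Cmult (Cmult Ci (RtoC (dx beta a b))) (cexpi (beta a b))) (r a b))
            (c3scale (cexpi (beta a b)) (vdx r a b)))).
  { apply (vder_scale (fun s => cexpi (beta s b)) (fun s => r s b)). apply (cder_cexpi (fun s => beta s b)). apply (smooth_isd_x Omega); auto. apply vd_r_x; auto. }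
  destruct (SU_ortho a b H) as [HO HD].
  assert (Z := det_frame _ (fun t => e1 t b) (fun t => e2 t b) a _ _ _ VF (vd_e1_x a b H) (vd_e2_x a b H) HO
     (locx (fun s t => det3 (c3scale (cexpi (beta s t)) (r s t)) (e1 s t) (e2 s t) = RtoC 1) a b H
        (fun s t h => proj2 (SU_ortho s t h))) HD).
  cbv beta in Z.
  rewrite herm_addl, !herm_scalel, !herm_scaler in Z.
  destruct (ON a b H) as [(o1&o2&o3&o4&o5&o6&o7&o8&o9) _].
  rewrite PE1, herm_scalel, o7, o1 in Z.
  pose proof (cexpi_norm (beta a b)) as Hl.
  set (L := cexpi (beta a b)) in *.
  rewrite <- Z.
  replace (Cmult Ci (RtoC (dx beta a b))) with
    (Cmult (Cmult Ci (RtoC (dx beta a b))) (Cmult L (Cconj L))) at 1 by (rewrite Hl; ring).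
  ring.
Qed.

Lemma Dety a b : Omega (a, b) ->
  Cplus (Cplus (Cmult Ci (RtoC (dy beta a b))) (herm (vdy e1 a b) (e1 a b)))
        (herm (vdy e2 a b) (e2 a b)) = RtoC 0.
Proof.
  intro H.
  assert (VF : vder (fun s => c3scale (cexpi (beta a s)) (r a s)) b
     (c3add (c3scale (Cmult (Cmult Ci (RtoC (dy beta a b))) (cexpi (beta a b))) (r a b))
            (c3scale (cexpi (beta a b)) (vdy r a b)))).
  { apply (vder_scale (fun s => cexpi (beta a s)) (fun s => r a s)). apply (cder_cexpi (fun s => beta a s)). apply (smooth_isd_y Omega); auto. apply vd_r_y; auto. }
  destruct (SU_ortho a b H) as [HO HD].
  assert (Z := det_frame _ (fun t => e1 a t) (fun t => e2 a t) b _ _ _ VF (vd_e1_y a b H) (vd_e2_y a b H) HO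
     (locy (fun s t => det3 (c3scale (cexpi (beta s t)) (r s t)) (e1 s t) (e2 s t) = RtoC 1) a b H
        (fun s t h => proj2 (SU_ortho s t h))) HD).
  cbv beta in Z.
  rewrite herm_addl, !herm_scalel, !herm_scaler in Z.
  destruct (ON a b H) as [(o1&o2&o3&o4&o5&o6&o7&o8&o9) _].
  rewrite PE2, herm_scalel, o8, o1 in Z.
  pose proof (cexpi_norm (beta a b)) as Hl.
  set (L := cexpi (beta a b)) in *.
  rewrite <- Z.
  replace (Cmult Ci (RtoC (dy beta a b))) with
    (Cmult (Cmult Ci (RtoC (dy beta a b))) (Cmult L (Cconj L))) at 1 by (rewrite Hl; ring).
  ring.
Qed.

Lemma Coef a b : Omega (a, b) ->
  let ev := exp (v a b) in
  herm (vdx e1 a b) (r a b) = ((- ev)%R, 0%R) /\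
  herm (vdx e1 a b) (e1 a b) = (0%R, (- dx beta a b - f a b)%R) /\
  herm (vdx e1 a b) (e2 a b) = ((- dy v a b)%R, g a b) /\
  herm (vdx e2 a b) (r a b) = (0%R, 0%R) /\
  herm (vdx e2 a b) (e1 a b) = (dy v a b, g a b) /\
  herm (vdx e2 a b) (e2 a b) = (0%R, f a b) /\
  herm (vdy e1 a b) (r a b) = (0%R, 0%R) /\
  herm (vdy e1 a b) (e1 a b) = (0%R, g a b) /\
  herm (vdy e1 a b) (e2 a b) = (dx v a b, f a b) /\
  herm (vdy e2 a b) (r a b) = ((- ev)%R, 0%R) /\
  herm (vdy e2 a b) (e1 a b) = ((- dx v a b)%R, f a b) /\
  herm (vdy e2 a b) (e2 a b) = (0%R, (- dy beta a b - g a b)%R).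
Proof.
  intro H; cbv zeta.
  destruct (ON a b H) as [(o1&o2&o3&o4&o5&o6&o7&o8&o9) _].
  destruct (Dfacts a b H) as (d1&d2&d3&d4&d5&d6).
  pose proof (Detx a b H) as hx. pose proof (Dety a b H) as hy.
  pose proof (Hf a b H) as hf. pose proof (Hg a b H) as hg.
  set (Q := scl v (vdy (vdx r)) a b).
  assert (E1y : vdy e1 a b = c3add (c3scale (RtoC (- dy v a b)) (e1 a b)) Q).
  { rewrite E1y_f by auto. reflexivity. }
  assert (E2x : vdx e2 a b = c3add (c3scale (RtoC (- dx v a b)) (e2 a b)) Q).
  { rewrite E2x_f by auto. unfold dscl_x. f_equal. unfold Q, scl. rewrite (vschwarz Omega); auto. }
  assert (hQ1 : herm Q (e1 a b) = (dy v a b, g a b)).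
  { rewrite E1y, herm_addl, herm_scalel, o2 in hg.
    transitivity (Cplus (Cplus (Cmult (RtoC (- dy v a b)) (RtoC 1)) (herm Q (e1 a b))) (RtoC (dy v a b))).
    rewrite RtoC_opp; ring. rewrite <- hg. cpair. }
  assert (hQ2 : herm Q (e2 a b) = (dx v a b, f a b)).
  { rewrite E2x, herm_addl, herm_scalel, o3 in hf.
    transitivity (Cplus (Cplus (Cmult (RtoC (- dx v a b)) (RtoC 1)) (herm Q (e2 a b))) (RtoC (dx v a b))).
    rewrite RtoC_opp; ring. rewrite <- hf. cpair. }
  assert (A32 : herm (vdx e2 a b) (e1 a b) = (dy v a b, g a b)).
  { rewrite E2x, herm_addl, herm_scalel, o9, hQ1. cpair. }
  assert (B23 : herm (vdy e1 a b) (e2 a b) = (dx v a b, f a b)).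
  { rewrite E1y, herm_addl, herm_scalel, o6, hQ2. cpair. }
  assert (A33 : herm (vdx e2 a b) (e2 a b) = (0%R, f a b)).
  { rewrite <- hf. cpair. }
  assert (B22 : herm (vdy e1 a b) (e1 a b) = (0%R, g a b)).
  { rewrite <- hg. cpair. }
  split; [|split; [|split; [|split; [|split; [|split; [|split; [|split; [|split; [|split; [|split]]]]]]]]]].
  - apply plus0 in d1. rewrite d1, PE1, herm_scaler, o2, Cconj_RtoC. cpair.
  - apply plus0 in hx. assert (K := hx). rewrite A33 in hx.
    transitivity (Cplus (Cplus (Cplus (Cmult Ci (RtoC (dx beta a b))) (herm (vdx e1 a b) (e1 a b))) (0%R, f a b))
                   (Copp (Cplus (Cmult Ci (RtoC (dx beta a b))) (0%R, f a b)))). ring.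
    rewrite hx. cpair.
  - apply plus0 in d5. rewrite d5, herm_sym, A32. cpair.
  - apply plus0 in d3. rewrite d3, PE1, herm_scaler, o9. cpair.
  - exact A32.
  - exact A33.
  - apply plus0 in d2. rewrite d2, PE2, herm_scaler, o6. cpair.
  - exact B22.
  - exact B23.
  - apply plus0 in d4. rewrite d4, PE2, herm_scaler, o3, Cconj_RtoC. cpair.
  - rewrite herm_sym. assert (d6b : herm (e1 a b) (vdy e2 a b) = Copp (herm (vdy e1 a b) (e2 a b))) by (apply plus0; rewrite Cplus_comm; exact d6). rewrite d6b, B23. cpair.
  - apply plus0 in hy. rewrite B22 in hy.
    transitivity (Copp (Copp (herm (vdy e2 a b) (e2 a b)))). ring.
    rewrite <- hy. cpair.
Qed.

Lemma sm_dx_v : smooth_on Omega (dx v).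
Proof. exact (smooth_dpart Omega v (true :: nil) Hv). Qed.
Lemma sm_dy_v : smooth_on Omega (dy v).
Proof. exact (smooth_dpart Omega v (false :: nil) Hv). Qed.
Lemma sm_dx_b : smooth_on Omega (dx beta).
Proof. exact (smooth_dpart Omega beta (true :: nil) Hb). Qed.

Definition W1 a b : C3 :=
  c3add (c3add (c3scale (RtoC (- dy (dx v) a b)) (e1 a b)) (c3scale (RtoC (- dx v a b)) (vdy e1 a b)))
        (dscl_y v (vdx (vdx r)) a b).
Definition W2 a b : C3 :=
  c3add (c3add (c3scale (RtoC (- dx (dy v) a b)) (e1 a b)) (c3scale (RtoC (- dy v a b)) (vdx e1 a b)))
        (dscl_x v (vdy (vdx r)) a b).

Lemma VW1 a b : Omega (a, b) -> vder (fun t => vdx e1 a t) b (W1 a b).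
Proof.
  intro H. eapply vder_ext_loc.
  - apply (locy (fun s t => dscl_x v (vdx r) s t = vdx e1 s t)); auto.
    intros s t h. symmetry. apply E1x_f; auto.
  - unfold dscl_x at 1. unfold W1.
    apply vder_add.
    + apply (vder_scale (fun t => RtoC (- dx v a t)) (fun t => e1 a t)).
      * apply cder_RtoC. apply rd_opp. apply (smooth_isd_y Omega); auto. apply sm_dx_v.
      * apply vd_e1_y; auto.
    + apply (vder_scl_y Omega); auto. apply smoothC3_dx, smoothC3_dx; auto.
Qed.
Lemma VW2 a b : Omega (a, b) -> vder (fun t => vdy e1 t b) a (W2 a b).
Proof.
  intro H. eapply vder_ext_loc.
  - apply (locx (fun s t => dscl_y v (vdx r) s t = vdy e1 s t)); auto.
    intros s t h. symmetry. apply E1y_f; auto.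
  - unfold dscl_y at 1. unfold W2.
    apply vder_add.
    + apply (vder_scale (fun t => RtoC (- dy v t b)) (fun t => e1 t b)).
      * apply cder_RtoC. apply rd_opp. apply (smooth_isd_x Omega); auto. apply sm_dy_v.
      * apply vd_e1_x; auto.
    + apply (vder_scl_x Omega); auto. apply smoothC3_dy, smoothC3_dx; auto.
Qed.
Lemma W12 a b : Omega (a, b) -> W1 a b = W2 a b.
Proof.
  intro H. unfold W1, W2. rewrite E1x_f, E1y_f by auto.
  rewrite (schwarz_on Omega v a b Ho Hv H).
  unfold dscl_x, dscl_y, scl.
  rewrite (vschwarz Omega (vdx r) a b Ho (smoothC3_dx _ _ Hr) H).
  generalize (vdx r a b) (vdx (vdx r) a b) (vdy (vdx r) a b) (vdy (vdx (vdx r)) a b).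
  intros. rewrite !RtoC_opp. c3ringv.
Qed.

Lemma Derivs a b : Omega (a, b) ->
  is_derive (fun t => f a t) b (- dy (dx beta) a b - snd (Cplus (herm (W1 a b) (e1 a b)) (herm (vdx e1 a b) (vdy e1 a b)))) /\
  is_derive (fun t => g t b) a (snd (Cplus (herm (W1 a b) (e1 a b)) (herm (vdy e1 a b) (vdx e1 a b)))) /\
  is_derive (fun t => g a t) b (snd (Cplus (herm (W1 a b) (e2 a b)) (herm (vdx e1 a b) (vdy e2 a b)))) /\
  dy (dy v) a b = - fst (Cplus (herm (W1 a b) (e2 a b)) (herm (vdx e1 a b) (vdy e2 a b))) /\
  is_derive (fun t => f t b) a (snd (Cplus (herm (W1 a b) (e2 a b)) (herm (vdy e1 a b) (vdx e2 a b)))) /\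
  dx (dx v) a b = fst (Cplus (herm (W1 a b) (e2 a b)) (herm (vdy e1 a b) (vdx e2 a b))).
Proof.
  intro H.
  pose proof (herm_der (fun t => vdx e1 a t) (fun t => e1 a t) b _ _ (VW1 a b H) (vd_e1_y a b H)) as K1.
  pose proof (herm_der (fun t => vdy e1 t b) (fun t => e1 t b) a _ _ (VW2 a b H) (vd_e1_x a b H)) as K2.
  pose proof (herm_der (fun t => vdx e1 a t) (fun t => e2 a t) b _ _ (VW1 a b H) (vd_e2_y a b H)) as K3.
  pose proof (herm_der (fun t => vdy e1 t b) (fun t => e2 t b) a _ _ (VW2 a b H) (vd_e2_x a b H)) as K4.
  rewrite <- (W12 a b H) in K2, K4.
  destruct K1 as [K1a K1b]. destruct K2 as [K2a K2b]. destruct K3 as [K3a K3b]. destruct K4 as [K4a K4b].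
  split; [|split; [|split; [|split; [|split]]]].
  - eapply rd_ext_loc; [|apply rd_minus; [apply rd_opp; apply (smooth_isd_y Omega (dx beta)); auto; apply sm_dx_b | exact K1b]].
    apply (locy (fun s t => - dx beta s t - snd (herm (vdx e1 s t) (e1 s t)) = f s t)); auto.
    intros s t h. pose proof (Coef s t h) as C. cbv zeta in C.
    destruct C as (c1&c2&c3&c4&c5&c6&c7&c8&c9&c10&c11&c12). rewrite c2. cbn [snd]. ring.
  - eapply rd_ext_loc; [|exact K2b].
    apply (locx (fun s t => snd (herm (vdy e1 s t) (e1 s t)) = g s t)); auto.
    intros s t h. pose proof (Coef s t h) as C. cbv zeta in C.
    destruct C as (c1&c2&c3&c4&c5&c6&c7&c8&c9&c10&c11&c12). rewrite c8. reflexivity.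
  - eapply rd_ext_loc; [|exact K3b].
    apply (locy (fun s t => snd (herm (vdx e1 s t) (e2 s t)) = g s t)); auto.
    intros s t h. pose proof (Coef s t h) as C. cbv zeta in C.
    destruct C as (c1&c2&c3&c4&c5&c6&c7&c8&c9&c10&c11&c12). rewrite c3. reflexivity.
  - eapply rd_unique. apply (smooth_isd_y Omega (dy v)); auto. apply sm_dy_v.
    eapply rd_ext_loc; [|apply rd_opp; exact K3a].
    apply (locy (fun s t => - fst (herm (vdx e1 s t) (e2 s t)) = dy v s t)); auto.
    intros s t h. pose proof (Coef s t h) as C. cbv zeta in C.
    destruct C as (c1&c2&c3&c4&c5&c6&c7&c8&c9&c10&c11&c12). rewrite c3. cbn [fst]. ring.
  - eapply rd_ext_loc; [|exact K4b].
    apply (locx (fun s t => snd (herm (vdy e1 s t) (e2 s t)) = f s t)); auto.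
    intros s t h. pose proof (Coef s t h) as C. cbv zeta in C.
    destruct C as (c1&c2&c3&c4&c5&c6&c7&c8&c9&c10&c11&c12). rewrite c9. reflexivity.
  - eapply rd_unique. apply (smooth_isd_x Omega (dx v)); auto. apply sm_dx_v.
    eapply rd_ext_loc; [|exact K4a].
    apply (locx (fun s t => fst (herm (vdy e1 s t) (e2 s t)) = dx v s t)); auto.
    intros s t h. pose proof (Coef s t h) as C. cbv zeta in C.
    destruct C as (c1&c2&c3&c4&c5&c6&c7&c8&c9&c10&c11&c12). rewrite c9. reflexivity.
Qed.

Lemma Final a b : Omega (a, b) ->
    dy (fun x y => f x y * exp (2 * v x y)) a b + dx (fun x y => g x y * exp (2 * v x y)) a b
      + exp (2 * v a b) * dy (dx beta) a b = 0 /\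
    dy (fun x y => g x y * exp (2 * v x y)) a b + dy v a b * exp (2 * v a b) * dy beta a b
      = dx (fun x y => f x y * exp (2 * v x y)) a b + dx v a b * exp (2 * v a b) * dx beta a b /\
    dx (dx v) a b + dy (dy v) a b + exp (2 * v a b)
      - 2 * ((f a b * exp (2 * v a b)) ^ 2 + (g a b * exp (2 * v a b)) ^ 2) * exp (- 4 * v a b)
      - (dx beta a b * (f a b * exp (2 * v a b)) + dy beta a b * (g a b * exp (2 * v a b))) * exp (- 2 * v a b) = 0.
Proof.
  intro H.
  destruct (Derivs a b H) as (Dfy & Dgx & Dgy & Hvyy & Dfx & Hvxx).
  destruct (ON a b H) as [HO HD].
  rewrite (herm_expand_r _ _ _ (vdx e1 a b) (vdy e1 a b) HO HD) in Dfy.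
  rewrite (herm_expand_r _ _ _ (vdy e1 a b) (vdx e1 a b) HO HD) in Dgx.
  rewrite (herm_expand_r _ _ _ (vdx e1 a b) (vdy e2 a b) HO HD) in Dgy, Hvyy.
  rewrite (herm_expand_r _ _ _ (vdy e1 a b) (vdx e2 a b) HO HD) in Dfx, Hvxx.
  pose proof (Coef a b H) as C. cbv zeta in C.
  destruct C as (c1&c2&c3&c4&c5&c6&c7&c8&c9&c10&c11&c12).
  assert (Ey : is_derive (fun t => exp (2 * v a t)) b (exp (2 * v a b) * (2 * dy v a b))).
  { apply (rd_exp (fun s => 2 * v a s)). apply (rd_scal2 (fun s => v a s)). apply (smooth_isd_y Omega v a b); auto. }
  assert (Ex : is_derive (fun t => exp (2 * v t b)) a (exp (2 * v a b) * (2 * dx v a b))).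
  { apply (rd_exp (fun s => 2 * v s b)). apply (rd_scal2 (fun s => v s b)). apply (smooth_isd_x Omega v a b); auto. }
  pose proof (is_derive_unique _ _ _ (rd_mult _ _ _ _ _ Dfy Ey)) as DUy.
  pose proof (is_derive_unique _ _ _ (rd_mult _ _ _ _ _ Dfx Ex)) as DUx.
  pose proof (is_derive_unique _ _ _ (rd_mult _ _ _ _ _ Dgy Ey)) as DVy.
  pose proof (is_derive_unique _ _ _ (rd_mult _ _ _ _ _ Dgx Ex)) as DVx.
  change (dy (fun x y => f x y * exp (2 * v x y)) a b) with (Derive (fun t => f a t * exp (2 * v a t)) b).
  change (dx (fun x y => f x y * exp (2 * v x y)) a b) with (Derive (fun t => f t b * exp (2 * v t b)) a).
  change (dy (fun x y => g x y * exp (2 * v x y)) a b) with (Derive (fun t => g a t * exp (2 * v a t)) b).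
  change (dx (fun x y => g x y * exp (2 * v x y)) a b) with (Derive (fun t => g t b * exp (2 * v t b)) a).
  rewrite DUy, DUx, DVy, DVx, Hvyy, Hvxx. clear DUy DUx DVy DVx Hvyy Hvxx Dfy Dfx Dgy Dgx.
  rewrite ?c1, ?c2, ?c3, ?c4, ?c5, ?c6, ?c7, ?c8, ?c9, ?c10, ?c11, ?c12.
  destruct (herm (W1 a b) (e1 a b)) as [p1 p2].
  destruct (herm (W1 a b) (e2 a b)) as [q1 q2].
  unfold Cminus, Cmult, Cplus, Copp, Cconj, RtoC, Ci, Re, Im; cbn [fst snd].
  assert (E2 : exp (2 * v a b) = exp (v a b) * exp (v a b)).
  { rewrite <- exp_plus. f_equal. ring. }
  assert (E4 : exp (- 4 * v a b) = / (exp (v a b) ^ 4)).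
  { replace (-4 * v a b) with (- (v a b + v a b + v a b + v a b)) by ring.
    rewrite exp_Ropp, !exp_plus. f_equal. ring. }
  assert (E2m : exp (- 2 * v a b) = / (exp (v a b) ^ 2)).
  { replace (-2 * v a b) with (- (v a b + v a b)) by ring.
    rewrite exp_Ropp, !exp_plus. f_equal. ring. }
  rewrite E2, E4, E2m.
  assert (Epos : exp (v a b) <> 0) by apply Rgt_not_eq, exp_pos.
  split; [ring | split; [ring | field; exact Epos]].
Qed.

End Main.


Theorem lemma1
  (Omega : R * R -> Prop) (r : R -> R -> C3) (v beta f g : R -> R -> R) :
  domain2 Omega ->
  smooth_on_C3 Omega r ->
  smooth_on Omega v ->
  smooth_on Omega beta ->
  (* r maps into S^5 *)
  (forall x y, Omega (x, y) -> c3norm (r x y) = 1) ->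
  (* <r,r_x> = <r,r_y> = <r_x,r_y> = 0 *)
  (forall x y, Omega (x, y) -> herm (r x y) (vdx r x y) = RtoC 0) ->
  (forall x y, Omega (x, y) -> herm (r x y) (vdy r x y) = RtoC 0) ->
  (forall x y, Omega (x, y) -> herm (vdx r x y) (vdy r x y) = RtoC 0) ->
  (* |r_x| = |r_y| = e^v *)
  (forall x y, Omega (x, y) -> c3norm (vdx r x y) = exp (v x y)) ->
  (forall x y, Omega (x, y) -> c3norm (vdy r x y) = exp (v x y)) ->
  (* rows e^{i beta} r, e^{-v} r_x, e^{-v} r_y form a matrix in SU(3) *)
  (forall x y, Omega (x, y) ->
     in_SU3 (c3scale (cexpi (beta x y)) (r x y))
            (c3scale (RtoC (exp (- v x y))) (vdx r x y))
            (c3scale (RtoC (exp (- v x y))) (vdy r x y))) ->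
  (* i f = < d_x (e^{-v} r_y), e^{-v} r_y >,  i g = < d_y (e^{-v} r_x), e^{-v} r_x > *)
  (forall x y, Omega (x, y) ->
     Cmult Ci (RtoC (f x y)) =
     herm (vdx (fun a b => c3scale (RtoC (exp (- v a b))) (vdy r a b)) x y)
          (c3scale (RtoC (exp (- v x y))) (vdy r x y))) ->
  (forall x y, Omega (x, y) ->
     Cmult Ci (RtoC (g x y)) =
     herm (vdy (fun a b => c3scale (RtoC (exp (- v a b))) (vdx r a b)) x y)
          (c3scale (RtoC (exp (- v x y))) (vdx r x y))) ->
  let U := fun x y => f x y * exp (2 * v x y) in
  let V := fun x y => g x y * exp (2 * v x y) in
  forall x y, Omega (x, y) ->
    dy U x y + dx V x y + exp (2 * v x y) * dy (dx beta) x y = 0 /\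
    dy V x y + dy v x y * exp (2 * v x y) * dy beta x y
      = dx U x y + dx v x y * exp (2 * v x y) * dx beta x y /\
    dx (dx v) x y + dy (dy v) x y + exp (2 * v x y)
      - 2 * (U x y ^ 2 + V x y ^ 2) * exp (- 4 * v x y)
      - (dx beta x y * U x y + dy beta x y * V x y) * exp (- 2 * v x y) = 0.
Proof.
  intros HD Hr Hv Hb _ _ _ _ _ _ HSU Hf Hg U V x y H.
  destruct HD as (_ & Ho & _).
  exact (Final Omega r v beta f g Ho Hr Hv Hb HSU Hf Hg x y H).
Qed.
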